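(* Let $T$ be a (planted) phylogenetic tree with leaf set $L$ and species map $\sigma:L\to\mathscr{S}$. Let $x\in L$, let $s\in\mathscr{S}$ with $s\neq\sigma(x)$, and let $L[s]=\{y\in L:\sigma(y)=s\}$. Let $Y\subseteq L[s]$ contain every best match of $x$ in species $s$, and let $Z\subseteq L$ be a non-empty set of leaves each of which is an outgroup for $Y\cup\{x\}$. Define a digraph $\Gamma$ on vertex set $Y$ as follows: for each pair of distinct $y',y''\in Y$ choose some $z\in Z$ and determine $Q=\overline{T}[x,y',y'',z]$ (which is assumed to be obtained correctly); if $Q\in\{(xz|y'y''),\times\}$ insert both arcs $(y',y'')$ and $(y'',y')$; if $Q=(xy'|y''z)$ insert the arc $(y'',y')$; if $Q=(xy''|y'z)$ insert the arc $(y',y'')$. Then $\Gamma$ has a unique strongly connected component without out-edges, and its vertex set is exactly the set $\{y\in L[s]: x\to y\}$ of best matches of $x$ in species $s$.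
   Context: A planted phylogenetic tree $T$ has a distinguished leaf $0_T$ (planted root) whose unique neighbour $\rho_T$ is the root; every other inner vertex has at least two children; $L$ is the set of leaves other than $0_T$. $a\preceq b$ means $b$ lies on the path from $a$ to $0_T$; $\operatorname{lca}(A)$ is the $\preceq$-minimal vertex above all of $A$. Best match: $y\in L$ is a best match of $x\in L$, written $x\to y$, if $\operatorname{lca}(x,y)\preceq\operatorname{lca}(x,y')$ for all $y'\in L$ with $\sigma(y')=\sigma(y)$. For $L'\subseteq L$ and $z\in L\setminus L'$, $z$ is an outgroup for $L'$ if $\operatorname{lca}(L')\prec\operatorname{lca}(L'\cup\{z\})$. The unrooted tree $\overline{T}$ is obtained from $T$ by deleting $0_T$ and its edge and, if $\rho_T$ has exactly two children, suppressing $\rho_T$. For four leaves $p,q,r,s$, $\overline{T}[p,q,r,s]$ is the subtree of $\overline{T}$ spanned by them with degree-2 vertices suppressed; $\overline{T}[p,q,r,s]=(pq|rs)$ if some edge of it separates $\{p,q\}$ from $\{r,s\}$, and $\overline{T}[p,q,r,s]=\times$ (star tree) if no such separating edge exists for any of the three splits. An arc $(a,b)$ of $\Gamma$ is an out-edge of a strongly connected component $B$ if $a\in B$, $b\notin B$. *)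

(* Defs.v *)
From mathcomp Require Import all_boot.
Set Implicit Arguments.
Unset Strict Implicit.
Unset Printing Implicit Defensive.

Section Tree.
Variable V : finType.
(* A rooted tree on the finite vertex type V is given by a parent map:
   every vertex other than the planted root r0 has its parent, and
   parent r0 = r0. *)
Variables (parent : V -> V) (r0 : V).

Definition children (v : V) : {set V} :=
  [set u | (u != v) && (parent u == v)].

Definition prec (a b : V) : bool := fconnect parent a b.
Definition sprec (a b : V) : bool := prec a b && (a != b).

Definition planted_tree : Prop :=
  [/\ parent r0 = r0,
      (forall v, prec v r0),
      #|children r0| = 1 &
      (forall v, v != r0 -> children v != set0 -> 1 < #|children v|)].

Definition leaves : {set V} := [set v | (v != r0) && (children v == set0)].

Definition rho : V := odflt r0 [pick u in children r0].

Definition above (A : {set V}) (v : V) : bool := [forall a in A, prec a v].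

Definition lca (A : {set V}) : V :=
  odflt r0 [pick v | above A v && [forall w, above A w ==> prec v w]].

Definition best_match (S : eqType) (sigma : V -> S) (x y : V) : Prop :=
  x \in leaves /\ y \in leaves /\
  forall y', y' \in leaves -> sigma y' = sigma y ->
    prec (lca [set x; y]) (lca [set x; y']).

Definition outgroup (L' : {set V}) (z : V) : Prop :=
  L' \subset leaves /\ z \in leaves :\: L' /\ sprec (lca L') (lca (z |: L')).

(* Splits of the unrooted tree Tbar: the edges of Tbar induce exactly the
   bipartitions {C(u), L \ C(u)} of the leaves, where C(u) is the set of leaves
   below u and u ranges over the vertices other than 0_T and rho_T
   (the edge {u, parent u}; when rho_T is suppressed, its two child edges
   merge into a single edge inducing the same split). *)
Definition below (u a : V) : bool := prec a u.

Definition quartet (p q r s : V) : bool :=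
  [exists u, [&& u != r0, u != rho &
     (below u p && below u q && ~~ below u r && ~~ below u s) ||
     (below u r && below u s && ~~ below u p && ~~ below u q)]].

Definition star (p q r s : V) : bool :=
  ~~ quartet p q r s && ~~ quartet p r q s && ~~ quartet p s q r.

(* The digraph Gamma on Y: arc (a,b), with z = zc a b the chosen outgroup.
   From the rules: with (y',y'') = (a,b), arc (a,b) is inserted iff
   Q in {(xz|ab), x} or Q = (xb|az). *)
Definition gamma_arc (x : V) (Y : {set V}) (zc : V -> V -> V) : rel V :=
  fun a b => [&& a \in Y, b \in Y, a != b &
     let z := zc a b in
     [|| quartet x z a b, star x a b z | quartet x b a z]].

Definition is_scc (Y : {set V}) (e : rel V) (B : {set V}) : Prop :=
  exists2 w, w \in Y & B = [set v in Y | connect e w v && connect e v w].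

Definition no_out_edges (e : rel V) (B : {set V}) : Prop :=
  forall a b, a \in B -> e a b -> b \in B.

End Tree.

(* Main.v *)
Require Import Defs.
From mathcomp Require Import all_boot.
Set Implicit Arguments. Unset Strict Implicit. Unset Printing Implicit Defensive.

Lemma prec_refl (V : finType) (p : V -> V) a : prec p a a.
Proof. exact: connect0. Qed.

Lemma prec_trans (V : finType) (p : V -> V) a b c :
  prec p a b -> prec p b c -> prec p a c.
Proof. exact: connect_trans. Qed.

Lemma prec_par (V : finType) (p : V -> V) a : prec p a (p a).
Proof. by apply: connect1; rewrite /= eqxx. Qed.

Lemma precE (V : finType) (p : V -> V) a b :
  prec p a b -> exists n, b = iter n p a.
Proof. by move=> H; exists (findex p a b); rewrite iter_findex. Qed.

Lemma prec_it (V : finType) (p : V -> V) a n : prec p a (iter n p a).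
Proof. exact: fconnect_iter. Qed.

Lemma prec_cmp (V : finType) (p : V -> V) c u v :
  prec p c u -> prec p c v -> prec p u v || prec p v u.
Proof.
move=> /precE [i ->] /precE [j ->].
case: (leqP i j) => H.
  by rewrite -(subnK H) iterD prec_it.
by rewrite -(subnK (ltnW H)) iterD prec_it orbT.
Qed.

Lemma nest (V : finType) (p : V -> V) c u1 u2 :
  prec p c u1 -> prec p c u2 ->
  (forall t, prec p t u1 -> prec p t u2) \/ (forall t, prec p t u2 -> prec p t u1).
Proof.
move=> H1 H2; case/orP: (prec_cmp H1 H2) => H.
  by left => t Ht; apply: prec_trans Ht H.
by right => t Ht; apply: prec_trans Ht H.
Qed.

Lemma iter_mul (V : finType) (p : V -> V) a n k :
  iter n p a = a -> iter (n * k) p a = a.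
Proof.
move=> H; elim: k => [|k IH]; first by rewrite muln0.
by rewrite mulnS iterD IH H.
Qed.

Lemma prec_antisym (V : finType) (p : V -> V) r0 a b :
  p r0 = r0 -> (forall v, prec p v r0) ->
  prec p a b -> prec p b a -> a = b.
Proof.
move=> Hr Hall /precE [i Hb] /precE [j Ha].
have Hc : iter (j + i) p a = a by rewrite iterD -Hb -Ha.
case: (posnP (j + i)) => Hn.
  by move/eqP: Hn; rewrite addn_eq0 => /andP [/eqP Hj /eqP Hi]; rewrite Hb Hi.
have toR : forall c, iter (j + i) p c = c -> c = r0.
  move=> c Hcc; have [m Hm] := precE (Hall c).
  have H2 := iter_mul m Hcc.
  have Hle : m <= (j + i) * m by rewrite leq_pmull.
  by rewrite -(subnK Hle) iterD -Hm iter_fix in H2.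
have Hcb : iter (j + i) p b = b.
  by rewrite addnC iterD -Ha -Hb.
by rewrite (toR a Hc) (toR b Hcb).
Qed.

Lemma below_rho (V : finType) (p : V -> V) r0 v :
  planted_tree p r0 -> v != r0 -> prec p v (rho p r0).
Proof.
case=> Hr Hall Hc1 _.
have [c Hc] := cards1P (introT eqP Hc1).
have Erho : rho p r0 = c.
  rewrite /rho; case: pickP => [u Hu|H] /=.
    by move: Hu; rewrite Hc inE => /eqP.
  by move: (H c); rewrite Hc inE eqxx.
rewrite Erho.
have [n Hn] := precE (Hall v).
elim: n v Hn => [|n IH] v Hn Hv; first by move: Hv; rewrite Hn eqxx.
case: (eqVneq (p v) r0) => Hp.
  have : v \in children p r0 by rewrite inE Hv Hp eqxx.
  by rewrite Hc inE => /eqP ->; apply: prec_refl.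
apply: prec_trans (prec_par p v) _; apply: IH Hp.
by rewrite Hn iterSr.
Qed.

Lemma above2 (V : finType) (p : V -> V) a b v :
  above p [set a; b] v = prec p a v && prec p b v.
Proof.
apply/forall_inP/andP => [H|[Ha Hb] t].
  by split; apply: H; rewrite !inE eqxx ?orbT.
by rewrite !inE => /orP [] /eqP ->.
Qed.

Lemma lca_spec (V : finType) (p : V -> V) r0 (A : {set V}) a :
  planted_tree p r0 -> a \in A ->
  above p A (lca p r0 A) /\ (forall w, above p A w -> prec p (lca p r0 A) w).
Proof.
case=> Hr Hall _ _ Ha.
have HA : above p A r0 by apply/forall_inP => t _; apply: Hall.
pose v := [arg min_(v < r0 | above p A v) findex p a v].
have Hv : above p A v && [forall w, above p A w ==> prec p v w].
  rewrite /v; case: arg_minnP => // u Hu Hmin.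
  rewrite Hu /=; apply/forall_inP => w Hw.
  have Hau : prec p a u by move/forall_inP: Hu; apply.
  have Haw : prec p a w by move/forall_inP: Hw; apply.
  have Hle := Hmin w Hw.
  rewrite -(iter_findex Hau) -(iter_findex Haw) -(subnK Hle) iterD.
  exact: prec_it.
rewrite /lca; case: pickP => [u /andP [Hu1 /forall_inP Hu2]|H] /=.
  by split => // w Hw; apply: Hu2.
by move: (H v); rewrite Hv.
Qed.

Lemma qswap (V : finType) (pa : V -> V) r0 p q r s :
  quartet pa r0 p q r s = quartet pa r0 p q s r.
Proof.
apply: eq_existsb => u.
case: (below pa u p); case: (below pa u q); case: (below pa u r);
  case: (below pa u s); by rewrite ?andbT ?andbF ?orbF.
Qed.

Lemma qexcl (V : finType) (pa : V -> V) r0 p q r s :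
  quartet pa r0 p q r s -> quartet pa r0 p r q s -> False.
Proof.
rewrite /below.
move=> /existsP [u1 /and3P [_ _ H1]] /existsP [u2 /and3P [_ _ H2]].
case/orP: H1 => /andP [/andP [/andP [A1 B1] C1] D1];
  case/orP: H2 => /andP [/andP [/andP [A2 B2] C2] D2].
- case: (nest A1 A2) => N; [by move/negP: C2; apply; apply: N B1
                            | by move/negP: C1; apply; apply: N B2].
- case: (nest B1 A2) => N; [by move/negP: C2; apply; apply: N A1
                            | by move/negP: D1; apply; apply: N B2].
- case: (nest A1 B2) => N; [by move/negP: D2; apply; apply: N B1
                            | by move/negP: C1; apply; apply: N A2].
- case: (nest B1 B2) => N; [by move/negP: D2; apply; apply: N A1
                            | by move/negP: D1; apply; apply: N A2].
Qed.


Lemma lca2 (V : finType) (p : V -> V) r0 a b :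
  planted_tree p r0 ->
  [/\ prec p a (lca p r0 [set a; b]), prec p b (lca p r0 [set a; b]) &
      forall w, prec p a w -> prec p b w -> prec p (lca p r0 [set a; b]) w].
Proof.
move=> Hp; have [H1 H2] := lca_spec Hp (set21 a b).
move: H1; rewrite above2 => /andP [Ha Hb]; split => // w Hw1 Hw2.
by apply: H2; rewrite above2 Hw1.
Qed.

Lemma key (V : finType) (p : V -> V) r0 x (Y : {set V}) a b z :
  planted_tree p r0 -> a \in Y -> b \in Y ->
  outgroup p r0 (x |: Y) z ->
  [|| quartet p r0 x z a b, star p r0 x a b z | quartet p r0 x b a z] =
  prec p (lca p r0 [set x; b]) (lca p r0 [set x; a]).
Proof.
move=> Hp HaY HbY [_ [Hz Hs]].
have Hp' := Hp; case: Hp' => Hr Hall _ _.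
set W := lca p r0 (x |: Y).
have [HW1 HW2] := lca_spec Hp (setU11 x Y).
have [HZ1 HZ2] := lca_spec Hp (setU11 z (x |: Y)).
have HxW : prec p x W by move/forall_inP: HW1; apply; rewrite setU11.
have HaW : prec p a W by move/forall_inP: HW1; apply; rewrite setU1r.
have HbW : prec p b W by move/forall_inP: HW1; apply; rewrite setU1r.
have nzW : ~~ prec p z W.
  apply/negP => HzW; move/andP: Hs => [Hs1 /negP Hs2]; apply: Hs2.
  apply/eqP; apply: (prec_antisym Hr Hall Hs1); apply: HZ2.
  apply/forall_inP => t; rewrite in_setU1 => /orP [/eqP -> //|Ht].
  by move/forall_inP: HW1; apply.
have zr0 : z != r0 by move: Hz; rewrite !inE => /andP [_ /andP []].
have okU : forall u, prec p u W -> (u != r0) && (u != rho p r0).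
  move=> u Hu; apply/andP; split; apply/eqP => Eu; move: Hu; rewrite Eu => Hu.
    have EW : W = r0 by apply: (prec_antisym Hr Hall (Hall W) Hu).
    by move: nzW; rewrite EW Hall.
  by move/negP: nzW; apply; apply: prec_trans (below_rho Hp zr0) Hu.
have [Lxa1 Lxa2 Lxa3] := lca2 x a Hp.
have [Lxb1 Lxb2 Lxb3] := lca2 x b Hp.
set La := lca p r0 [set x; a] in Lxa1 Lxa2 Lxa3 *.
set Lb := lca p r0 [set x; b] in Lxb1 Lxb2 Lxb3 *.
have QE : quartet p r0 x a b z = ~~ prec p Lb La.
  apply/idP/idP.
    move=> /existsP [u /and3P [_ _ H]]; apply/negP => HbaL.
    rewrite /below in H.
    case/orP: H => /andP [/andP [/andP [A1 B1] C1] D1].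
      by move/negP: C1; apply; apply: prec_trans Lxb2 (prec_trans HbaL (Lxa3 _ A1 B1)).
    case: (nest A1 HbW) => N.
      by move/negP: nzW; apply; apply: N.
    by move/negP: C1; apply; apply: N.
  move=> Hn; apply/existsP; exists La.
  have HLW : prec p La W by apply: Lxa3.
  have /andP [n1 n2] := okU La HLW; rewrite n1 n2 /= /below Lxa1 Lxa2 /=.
  apply/orP; left.
  apply/andP; split.
    by apply/negP => HbL; move/negP: Hn; apply; apply: Lxb3.
  by apply/negP => HzL; move/negP: nzW; apply; apply: prec_trans HzL HLW.
rewrite /star; case Hq: (quartet p r0 x a b z).
  have N1 : quartet p r0 x z a b = false.
    apply/negbTE/negP => H2; apply: (@qexcl _ p r0 x a z b _ H2).
    by rewrite -qswap.
  have N2 : quartet p r0 x b a z = false.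
    by apply/negbTE/negP => H2; apply: (qexcl Hq H2).
  by move: QE; rewrite Hq N1 N2 /= => /esym/negbTE ->.
move: QE; rewrite Hq => /esym/negbFE ->.
by case: (quartet p r0 x z a b); case: (quartet p r0 x b a z).
Qed.

Lemma findex_prec (V : finType) (p : V -> V) x u v :
  prec p x u -> prec p x v -> findex p x u <= findex p x v -> prec p u v.
Proof.
move=> Hu Hv Hle.
by rewrite -(iter_findex Hu) -(iter_findex Hv) -(subnK Hle) iterD prec_it.
Qed.

Theorem theorem1 (V : finType) (parent : V -> V) (r0 : V)
  (S : eqType) (sigma : V -> S) (x : V) (s : S)
  (Y Z : {set V}) (zc : V -> V -> V) :
  planted_tree parent r0 ->
  x \in leaves parent r0 ->
  s != sigma x ->
  (exists2 y, y \in leaves parent r0 & sigma y = s) ->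
  Y \subset [set y in leaves parent r0 | sigma y == s] ->
  (forall y, y \in leaves parent r0 -> sigma y = s ->
     best_match parent r0 sigma x y -> y \in Y) ->
  Z != set0 ->
  (forall z, z \in Z -> outgroup parent r0 (x |: Y) z) ->
  (forall a b, a \in Y -> b \in Y -> a != b -> zc a b \in Z /\ zc a b = zc b a) ->
  forall B : {set V},
    (is_scc Y (gamma_arc parent r0 x Y zc) B /\
     no_out_edges (gamma_arc parent r0 x Y zc) B)
    <-> (forall y, y \in B <->
           [/\ y \in leaves parent r0, sigma y = s &
                best_match parent r0 sigma x y]).
Proof.
move=> Hp Hx Hsx [y0 Hy0l Hy0s] HYsub HbmY HZ Hout Hzc B.
set e := gamma_arc parent r0 x Y zc.
set L := fun y => lca parent r0 [set x; y].
have HYl : forall y, y \in Y -> (y \in leaves parent r0) /\ sigma y = s.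
  by move=> y /(subsetP HYsub); rewrite inE => /andP [-> /eqP].
have K1 : forall a b, e a b = [&& a \in Y, b \in Y, a != b & prec parent (L b) (L a)].
  move=> a b; rewrite /e /gamma_arc.
  case HaY: (a \in Y) => //; case HbY: (b \in Y) => //; case Hab: (a != b) => //=.
  by apply: (key (Y := Y)) => //; apply: Hout; case: (Hzc a b HaY HbY Hab).
pose P := fun y => (y \in leaves parent r0) && (sigma y == s).
have Py0 : P y0 by rewrite /P Hy0l Hy0s eqxx.
pose b0 := [arg min_(y < y0 | P y) findex parent x (L y)].
have [Pb0 Hb0min] : P b0 /\ forall y', P y' -> prec parent (L b0) (L y').
  rewrite /b0; case: arg_minnP => // u Pu Hmin; split => // y' Py'.
  have [Hu1 _ _] := lca2 x u Hp.
  have [Hy1 _ _] := lca2 x y' Hp.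
  exact: findex_prec Hu1 Hy1 (Hmin y' Py').
have [Hb0l Hb0s] : b0 \in leaves parent r0 /\ sigma b0 = s.
  by move/andP: Pb0 => [-> /eqP].
have bm0 : forall y, y \in leaves parent r0 -> sigma y = s ->
    (forall y', P y' -> prec parent (L y) (L y')) -> best_match parent r0 sigma x y.
  move=> y Hyl Hys Hm; split => //; split => // y' Hy'l Hy's; apply: Hm.
  by rewrite /P Hy'l Hy's Hys eqxx.
have Hb0Y : b0 \in Y by apply: HbmY => //; apply: bm0.
pose Bs := [set y in Y | prec parent (L y) (L b0)].
have Bs_best : forall y, y \in Bs -> forall y', P y' -> prec parent (L y) (L y').
  move=> y; rewrite inE => /andP [_ H] y' Py'; exact: prec_trans H (Hb0min _ Py').
have bm_iff : forall y, [/\ y \in leaves parent r0, sigma y = s &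
                best_match parent r0 sigma x y] <-> y \in Bs.
  move=> y; split.
    case=> Hyl Hys Hbm; rewrite inE (HbmY y) //=.
    case: Hbm => _ [_ H]; apply: H => //; by rewrite Hys.
  move=> Hy; have Hy' := Hy; rewrite inE in Hy'; case/andP: Hy' => HyY _.
  have [Hyl Hys] := HYl y HyY; split => //; apply: bm0 => //.
  exact: Bs_best.
have closed1 : forall a b, e a b -> a \in Bs -> b \in Bs.
  move=> a b; rewrite K1 => /and4P [_ HbY _ Hba]; rewrite !inE HbY /= => /andP [_ H].
  exact: prec_trans Hba H.
have closedc : forall a v, connect e a v -> a \in Bs -> v \in Bs.
  move=> a v /connectP [q Hq ->]; elim: q a Hq => [|c q IH] a //= /andP [Hac Hq] Ha.
  exact: IH Hq (closed1 _ _ Hac Ha).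
have toBs : forall a b, a \in Y -> b \in Bs -> connect e a b.
  move=> a b HaY HbB; case: (eqVneq a b) => [->|Hab]; first exact: connect0.
  apply: connect1; rewrite K1 HaY Hab /=.
  have Hb' := HbB; rewrite inE in Hb'; case/andP: Hb' => -> _ /=.
  apply: Bs_best => //; have [Hal Has] := HYl a HaY.
  by rewrite /P Hal Has eqxx.
have BsY : forall y, y \in Bs -> y \in Y by move=> y; rewrite inE => /andP [].
have scc : forall w, w \in Bs -> forall y,
    (y \in Y) && connect e w y && connect e y w = (y \in Bs).
  move=> w Hw y; apply/idP/idP.
    by move=> /andP [/andP [_ H] _]; apply: closedc H Hw.
  move=> Hy; rewrite BsY //= toBs //; last exact: BsY.
  by rewrite toBs //; apply: BsY.
have Hb0B : b0 \in Bs by rewrite inE Hb0Y prec_refl.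
split.
  case=> [[w Hw EB] Hno] y.
  have HwB : w \in Bs.
    apply/negPn/negP => Hn.
    have Hwb : e w b0.
      rewrite K1 Hw Hb0Y /=; apply/andP; split.
        by apply/eqP => E; move: Hn; rewrite E Hb0B.
      apply: Bs_best => //; have [Hal Has] := HYl w Hw.
      by rewrite /P Hal Has eqxx.
    have : b0 \in B.
      apply: Hno Hwb; rewrite EB inE Hw /=; by rewrite connect0.
    rewrite EB inE => /andP [_ /andP [_ Hc]].
    by move/negP: Hn; apply; apply: closedc Hc Hb0B.
  rewrite EB inE andbA scc //; exact: (iff_sym (bm_iff y)).
move=> HB.
have EB : B = Bs by apply/setP => y; apply/idP/idP => [/HB/bm_iff|/bm_iff/HB].
split.
  exists b0 => //; apply/setP => y; rewrite EB inE andbA scc //.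
by rewrite EB => a b Ha Hab; apply: closed1 Hab Ha.
Qed.
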